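(* Let $\mathbb{K}\in\{\mathbb{R},\mathbb{C}\}$ and let $\Gamma_1,\Gamma_2\subset\mathsf{GL}_d(\mathbb{K})$ be semigroups in ping-pong position relative to open sets $U_1,U_2\subset\mathbb{P}(\mathbb{K}^d)$, $V_1,V_2\subset\mathsf{Gr}_{d-1}(\mathbb{K}^d)$. Let $\varepsilon>0$ be such that $\mathrm{dist}(\overline{U_i},\overline{V_j}):=\inf\{\mathrm{dist}(x,\mathbb{P}(W)):x\in\overline{U_i},W\in\overline{V_j}\}\ge\varepsilon$ for $\{i,j\}=\{1,2\}$, and let $0<\theta<\varepsilon^2$ and $x_i\in U_i$, $y_i\in V_i$ be such that $B_\theta(x_i)\subset U_i$ and $B_\theta(y_i)\subset V_i$ for $i=1,2$. Let $\Delta=\langle\Gamma_1,\Gamma_2\rangle$, $M=\max\{\frac{16}{\varepsilon\theta},\frac{8\sqrt{d-1}}{\varepsilon^2}\}$, and $F=\{h\in\Delta:\frac{\sigma_1}{\sigma_2}(h)<M\}$. Let $g\in\Delta\smallsetminus F$ be written as a reduced word $g=g_1\cdots g_n$, $n\ge1$, with $g_k\in(\Gamma_1\cup\Gamma_2)\smallsetminus\{I_d\}$. Then: (i) if $i(g_1)\in\{1,2\}$ is the unique index with $g_1\in\Gamma_{i(g_1)}$, then $d_{\mathbb{P}}(\Xi_1(g),U_{i(g_1)})\le\frac{\varepsilon}{8}$; (ii) if $i(g_n)\in\{1,2\}$ is the unique index with $g_n\in\Gamma_{i(g_n)}$, then $d_{\mathsf{Gr}}(\Xi_{d-1}(g^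{-1}),V_{i(g_n)})\le\frac{\varepsilon}{8}$.
   Context: $\mathbb{P}(\mathbb{K}^d)$ carries the metric $d_{\mathbb{P}}([u],[v])=\sqrt{1-\frac{|\langle u,v\rangle|^2}{\|u\|^2\|v\|^2}}$ (standard Hermitian inner product); $B_r(\cdot)$ are open balls; $\mathrm{dist}(X,Y)$ is the minimal $d_{\mathbb{P}}$-distance between subsets of $\mathbb{P}(\mathbb{K}^d)$; $\mathsf{Gr}_{d-1}(\mathbb{K}^d)$ carries the metric $d_{\mathsf{Gr}}(u^\perp,v^\perp)=d_{\mathbb{P}}([u],[v])$; distance from a point to a set is the infimum. For $g$ with singular values $\sigma_1(g)\ge\dots\ge\sigma_d(g)$ and Cartan decomposition $g=k_g\mathrm{diag}(\sigma_1(g),\dots,\sigma_d(g))k_g'$, if $\sigma_k(g)>\sigma_{k+1}(g)$ then $\Xi_k(g):=k_g\langle e_1,\dots,e_k\rangle$ (independent of choices). A point $[v]$ and hyperplane $W$ are transverse if $v\notin W$. Ping-pong position: whenever $\{i,j\}=\{1,2\}$, $\overline{U_i}$ and $\overline{V_j}$ are transverse, and for all $\gamma\in\Gamma_i\smallsetminus\{I_d\}$, $\gamma\overline{U_j}\subset U_i$ and $\gamma^{-1}\overline{V_j}\subset V_i$. A reduced word is a product of elements of $(\Gamma_1\cup\Gamma_2)\smallsetminus\{I_d\}$ with no two consecutive factors in the same $\Gamma_k$. *)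

(* Defs.v *)
From HB Require Import structures.
From mathcomp Require Import all_boot all_order all_algebra.
From mathcomp Require Import all_classical all_reals.
From mathcomp Require Import complex.
Set Implicit Arguments. Unset Strict Implicit. Unset Printing Implicit Defensive.
Import Order.TTheory GRing.Theory Num.Theory.
Local Open Scope ring_scope.
Local Open Scope classical_set_scope.

(* The field K: b = true means K = R, b = false means K = C = R[i]. *)
Definition Kfld (R : realType) (b : bool) : fieldType :=
  if b then (R : fieldType) else (R[i] : fieldType).

Definition kconj (R : realType) (b : bool) : Kfld R b -> Kfld R b :=
  if b return Kfld R b -> Kfld R b then fun x => x
  else fun x : R[i] => let: Complex a c := x in Complex a (- c).

Definition kabs2 (R : realType) (b : bool) : Kfld R b -> R :=
  if b return Kfld R b -> R then fun x : R => x ^+ 2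
  else fun x : R[i] => let: Complex a c := x in a ^+ 2 + c ^+ 2.

Definition kofR (R : realType) (b : bool) : R -> Kfld R b :=
  if b return R -> Kfld R b then fun x => x else fun x : R => Complex x 0.

Section Defs.
Variables (R : realType) (b : bool) (d : nat).
Local Notation K := (Kfld R b).

Definition hdot (u v : 'cV[K]_d) : K := \sum_(i < d) u i 0 * kconj (v i 0).
Definition norm2 (u : 'cV[K]_d) : R := \sum_(i < d) kabs2 (u i 0).

Definition kadj (m : 'M[K]_d) : 'M[K]_d := map_mx (@kconj R b) m^T.

(* Points of P(K^d) are represented by nonzero vectors; the metric d_P. *)
Definition dP (u v : 'cV[K]_d) : R :=
  Num.sqrt (1 - kabs2 (hdot u v) / (norm2 u * norm2 v)).

(* A subset of P(K^d) is represented as a scale-invariant set of nonzero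
   vectors. Hyperplanes W = w^perp (points of Gr_{d-1}) are represented by
   a nonzero normal vector w, and d_Gr(u^perp, v^perp) = d_P([u],[v]), so
   subsets of Gr_{d-1} are also represented as projective sets (of normals). *)
Definition projset (U : set 'cV[K]_d) :=
  forall u, U u -> u != 0 /\ forall c : K, c != 0 -> U (c *: u).

Definition perp (w : 'cV[K]_d) : set 'cV[K]_d := [set x | hdot x w = 0].

Definition openP (U : set 'cV[K]_d) :=
  forall u, U u -> exists2 r : R, 0 < r &
    forall v, v != 0 -> dP u v < r -> U v.
Definition closP (U : set 'cV[K]_d) : set 'cV[K]_d :=
  [set x | x != 0 /\ forall r : R, 0 < r -> exists y, U y /\ dP x y < r].

Definition ball_sub (x : 'cV[K]_d) (r : R) (U : set 'cV[K]_d) :=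
  forall v, v != 0 -> dP x v < r -> U v.

Definition dist_pt_hyp (x w : 'cV[K]_d) : R :=
  inf [set dP x y | y in [set y | y != 0 /\ perp w y]].

Definition distUV (U V : set 'cV[K]_d) : R :=
  inf [set r | exists x w, U x /\ V w /\ r = dist_pt_hyp x w].

Definition dist_pt_set (x : 'cV[K]_d) (U : set 'cV[K]_d) : R :=
  inf [set dP x y | y in U].

Definition unitary (k : 'M[K]_d) := k *m kadj k = 1%:M.

(* Cartan decomposition g = k diag(s_1,...,s_d) k' with k, k' unitary and
   s_1 >= ... >= s_d >= 0 (s given as a list of length d; s_1 = nth 0 s 0). *)
Definition cartan (g k : 'M[K]_d) (s : seq R) (k' : 'M[K]_d) :=
  [/\ unitary k /\ unitary k', size s = d,
      (forall i, (i < d)%N -> 0 <= nth 0 s i),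
      (forall i j, (i <= j < d)%N -> nth 0 s j <= nth 0 s i) &
      g = k *m diag_mx (\row_(i < d) kofR b (nth 0 s i)) *m k'].

Definition span_first (k : 'M[K]_d) (m : nat) : set 'cV[K]_d :=
  [set k *m c | c in [set c : 'cV[K]_d | forall i : 'I_d, (m <= i)%N -> c i 0 = 0]].

Definition wordprod (gs : seq 'M[K]_d) : 'M[K]_d := foldr (@mulmx K d d d) 1%:M gs.

Definition GLsemigroup (G : set 'M[K]_d) :=
  (forall g, G g -> g \in unitmx) /\ (forall g h, G g -> G h -> G (g *m h)).

(* ping-pong position (indices 1,2 encoded as true,false; {i,j}={1,2} iff j = ~~ i) *)
Definition pingpong (G : bool -> set 'M[K]_d) (U V : bool -> set 'cV[K]_d) :=
  forall i : bool,
    (forall x w, closP (U i) x -> closP (V (~~ i)) w -> hdot x w != 0) /\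
    forall g, G i g -> g != 1%:M ->
      (forall x, closP (U (~~ i)) x -> U i (g *m x)) /\
      (forall w, closP (V (~~ i)) w ->
         exists2 w', V i w' & (fun x => invmx g *m x) @` perp w = perp w').

Definition reduced (G : bool -> set 'M[K]_d) (gs : seq 'M[K]_d) :=
  (forall h, h \in gs -> (G true h \/ G false h) /\ h != 1%:M) /\
  forall k, (k.+1 < size gs)%N -> forall i : bool,
    ~ (G i (nth 1%:M gs k) /\ G i (nth 1%:M gs k.+1)).

End Defs.

(* Main.v *)
Require Import Defs.
From HB Require Import structures.
From mathcomp Require Import all_boot all_order all_algebra.
From mathcomp Require Import all_classical all_reals.
From mathcomp Require Import complex.
From mathcomp Require Import ring lra.
Import Order.TTheory GRing.Theory Num.Theory.
Local Open Scope ring_scope.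
Local Open Scope classical_set_scope.
Set Implicit Arguments. Unset Strict Implicit.

Section K.
Variables (R : realType) (b : bool).
Local Notation K := (Kfld R b).
Local Notation kc := (@kconj R b).
Local Notation ka := (@kabs2 R b).
Local Notation kr := (@kofR R b).

Lemma kconjD (x y : K) : kc (x + y) = kc x + kc y.
Proof. case: b x y => [//|] [a1 b1] [a2 b2] /=; congr Complex; ring. Qed.
Lemma kconjM (x y : K) : kc (x * y) = kc x * kc y.
Proof. case: b x y => [//|] [a1 b1] [a2 b2] /=; congr Complex; ring. Qed.
Lemma kconj0 : kc 0 = 0.
Proof. case: b => [//|] /=; congr Complex; ring. Qed.
Lemma kconjN (x : K) : kc (- x) = - kc x.
Proof. case: b x => [//|] [a1 b1] /=; congr Complex; ring. Qed.
Lemma kconjK (x : K) : kc (kc x) = x.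
Proof. case: b x => [//|] [a1 b1] /=; congr Complex; ring. Qed.
Lemma kconjR r : kc (kr r) = kr r.
Proof. case: b => [//|] /=; congr Complex; ring. Qed.
Lemma kofRD r s : kr (r + s) = kr r + kr s.
Proof. case: b => [//|] /=; congr Complex; ring. Qed.
Lemma kofRM r s : kr (r * s) = kr r * kr s.
Proof. case: b => [//|] /=; congr Complex; ring. Qed.
Lemma kofR0 : kr 0 = 0.
Proof. by case: b. Qed.
Lemma kofR1 : kr 1 = 1.
Proof. by case: b. Qed.
Lemma kofR_inj r s : kr r = kr s -> r = s.
Proof. by case: b => //= -[]. Qed.
Lemma kmulconj (x : K) : x * kc x = kr (ka x).
Proof. case: b x => [/= x|[a1 b1]] /=; first by rewrite expr2. congr Complex; ring. Qed.
Lemma kabs2_ge0 (x : K) : 0 <= ka x.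
Proof. case: b x => [/= x|[a1 b1]] /=; first exact: sqr_ge0. by rewrite addr_ge0 ?sqr_ge0. Qed.
Lemma kabs2_eq0 (x : K) : ka x = 0 -> x = 0.
Proof.
case: b x => [/= x|[a1 b1]] /=; first by move/eqP; rewrite sqrf_eq0 => /eqP.
move/eqP; rewrite paddr_eq0 ?sqr_ge0 // !sqrf_eq0 => /andP[/eqP-> /eqP->] //.
Qed.
Lemma kabs2M (x y : K) : ka (x * y) = ka x * ka y.
Proof. case: b x y => [/= x y|[a1 b1] [a2 b2]] /=; first by rewrite exprMn. ring. Qed.
Lemma kabs2_conj (x : K) : ka (kc x) = ka x.
Proof. case: b x => [//|[a1 b1]] /=; ring. Qed.
Lemma kabs2R r : ka (kr r) = r ^+ 2.
Proof. case: b => [//|] /=; ring. Qed.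
Lemma kabs20 : ka 0 = 0.
Proof. by rewrite -kofR0 kabs2R expr0n. Qed.
End K.
Section V.
Variables (R : realType) (b : bool) (d : nat).
Local Notation K := (Kfld R b).
Local Notation kc := (@kconj R b).
Local Notation ka := (@kabs2 R b).
Local Notation kr := (@kofR R b).
Local Notation hdot := (@hdot R b d).
Local Notation norm2 := (@norm2 R b d).
Local Notation dP := (@dP R b d).
Local Notation kadj := (@kadj R b d).

Lemma kconj_sum I (r : seq I) (P : pred I) (F : I -> K) :
  kc (\sum_(i <- r | P i) F i) = \sum_(i <- r | P i) kc (F i).
Proof. exact: (big_morph _ (@kconjD R b) (@kconj0 R b)). Qed.

Lemma hdotC u v : hdot v u = kc (hdot u v).
Proof. rewrite /Defs.hdot kconj_sum; apply: eq_bigr => i _; by rewrite kconjM kconjK mulrC. Qed.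

Lemma hdotZl c u v : hdot (c *: u) v = c * hdot u v.
Proof. rewrite /Defs.hdot mulr_sumr; apply: eq_bigr => i _; by rewrite mxE mulrA. Qed.

Lemma hdotZr c u v : hdot u (c *: v) = hdot u v * kc c.
Proof. by rewrite hdotC hdotZl kconjM -hdotC mulrC. Qed.

Lemma hdotDl u u' v : hdot (u + u') v = hdot u v + hdot u' v.
Proof. rewrite /Defs.hdot -big_split; apply: eq_bigr => i _; by rewrite mxE mulrDl. Qed.

Lemma hdotNl u v : hdot (- u) v = - hdot u v.
Proof. by rewrite -scaleN1r hdotZl mulN1r. Qed.

Lemma hdot_mul (A : 'M[K]_d) x y : hdot (A *m x) y = hdot x (kadj A *m y).
Proof.
rewrite /Defs.hdot.
transitivity (\sum_(i < d) \sum_(j < d) A i j * x j 0 * kc (y i 0)).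
  by apply: eq_bigr => i _; rewrite mxE mulr_suml.
rewrite exchange_big /=; apply: eq_bigr => j _.
rewrite mxE kconj_sum mulr_sumr; apply: eq_bigr => i _.
by rewrite /Defs.kadj !mxE kconjM kconjK mulrCA mulrA.
Qed.

Lemma hdotxx x : hdot x x = kr (norm2 x).
Proof.
rewrite /Defs.hdot /Defs.norm2 (big_morph _ (@kofRD R b) (@kofR0 R b)).
by apply: eq_bigr => i _; rewrite kmulconj.
Qed.

Lemma norm2_ge0 x : 0 <= norm2 x.
Proof. by rewrite /Defs.norm2 sumr_ge0 // => i _; rewrite kabs2_ge0. Qed.

Lemma norm2_eq0 x : norm2 x = 0 -> x = 0.
Proof.
move=> /eqP; rewrite /Defs.norm2 psumr_eq0; last by move=> i _; rewrite kabs2_ge0.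
move=> /allP H; apply/matrixP => i j; rewrite (ord1 j) mxE.
apply: kabs2_eq0; apply/eqP; apply: H; exact: mem_index_enum.
Qed.

Lemma norm2_gt0 x : x != 0 -> 0 < norm2 x.
Proof. move=> nx; rewrite lt_neqAle norm2_ge0 andbT; apply/eqP => /esym/norm2_eq0/eqP; exact/negP. Qed.

Lemma norm2Z c x : norm2 (c *: x) = ka c * norm2 x.
Proof. rewrite /Defs.norm2 mulr_sumr; apply: eq_bigr => i _; by rewrite mxE kabs2M. Qed.

Lemma kadjK A : kadj (kadj A) = A.
Proof. by apply/matrixP => i j; rewrite !mxE kconjK. Qed.

Lemma kadjM (A B : 'M[K]_d) : kadj (A *m B) = kadj B *m kadj A.
Proof.
apply/matrixP => i j; rewrite !mxE kconj_sum; apply: eq_bigr => k _.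
by rewrite !mxE kconjM mulrC.
Qed.

Lemma kadj1 : kadj 1%:M = 1%:M.
Proof.
apply/matrixP => i j; rewrite !mxE eq_sym; case: (i == j); rewrite ?mulr0n ?mulr1n ?kconj0 //.
by rewrite -(kofR1 R b) kconjR.
Qed.

Lemma kadj_diag (a : 'I_d -> R) :
  kadj (diag_mx (\row_i kr (a i))) = diag_mx (\row_i kr (a i)).
Proof.
apply/matrixP => i j; rewrite !mxE eq_sym; case: eqP => [->|_]; rewrite ?mulr0n ?mulr1n ?kconj0 //.
by rewrite kconjR.
Qed.

Lemma unitary_l (k : 'M[K]_d) : unitary k -> kadj k *m k = 1%:M.
Proof. rewrite /unitary => H; exact: mulmx1C H. Qed.

Lemma dP_sym u v : dP u v = dP v u.
Proof. by rewrite /Defs.dP hdotC kabs2_conj [norm2 u * _]mulrC. Qed.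

Lemma dPZ c u v : c != 0 -> dP (c *: u) v = dP u v.
Proof.
move=> nc; rewrite /Defs.dP hdotZl kabs2M norm2Z -[ka c * norm2 u * _]mulrA.
have ka0 : ka c != 0 by apply/eqP => /kabs2_eq0/eqP; apply/negP.
by rewrite -mulf_div divff // mul1r.
Qed.

Lemma dP_unit (Q : 'M[K]_d) u v : kadj Q *m Q = 1%:M -> dP (Q *m u) (Q *m v) = dP u v.
Proof.
move=> HQ; rewrite /Defs.dP !hdot_mul !mulmxA HQ !mul1mx.
have N x : norm2 (Q *m x) = norm2 x.
  by apply: (@kofR_inj R b); rewrite -!hdotxx hdot_mul mulmxA HQ mul1mx.
by rewrite !N.
Qed.

Lemma dP_ge0 u v : 0 <= dP u v.
Proof. exact: sqrtr_ge0. Qed.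

Lemma dP_le1 u v : dP u v <= 1.
Proof.
rewrite /Defs.dP -[X in _ <= X]sqrtr1; apply: ler_wsqrtr; rewrite gerBl.
by rewrite divr_ge0 ?kabs2_ge0 // mulr_ge0 ?norm2_ge0.
Qed.

Lemma dPxx u : u != 0 -> dP u u = 0.
Proof.
move=> nu; rewrite /Defs.dP hdotxx kabs2R -expr2 divff ?subrr ?sqrtr0 //.
by rewrite expf_neq0 // gt_eqF // norm2_gt0.
Qed.
End V.
Lemma inf_le_elem (R : realType) (E : set R) r :
  (forall x, E x -> 0 <= x) -> E r -> inf E <= r.
Proof. move=> H Er; apply: ge_inf => //; exists 0 => x /H //. Qed.

Lemma inf_le1 (R : realType) (E : set R) :
  (forall x, E x -> 0 <= x <= 1) -> inf E <= 1.
Proof.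
move=> H; case: (pselect (E !=set0)) => [[r Er]|].
  apply: le_trans (inf_le_elem _ Er) _; first by move=> x /H /andP[].
  by case/andP: (H _ Er).
move=> ne; suff -> : E = set0 by rewrite inf0.
by apply/seteqP; split => // x Ex; apply: ne; exists x.
Qed.

Lemma inf_ge0 (R : realType) (E : set R) :
  (forall x, E x -> 0 <= x) -> 0 <= inf E.
Proof.
move=> H; case: (pselect (E !=set0)) => [ne|ne].
  by apply: lb_le_inf => // x /H.
suff -> : E = set0 by rewrite inf0.
by apply/seteqP; split => // x Ex; apply: ne; exists x.
Qed.

Section E.
Variables (R : realType) (b : bool) (d : nat).
Local Notation K := (Kfld R b).
Local Notation kc := (@kconj R b).
Local Notation ka := (@kabs2 R b).
Local Notation kr := (@kofR R b).
Local Notation hdot := (@hdot R b d).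
Local Notation norm2 := (@norm2 R b d).
Local Notation dP := (@dP R b d).
Local Notation kadj := (@kadj R b d).

Definition dg (a : 'I_d -> R) : 'M[K]_d := diag_mx (\row_i kr (a i)).

Lemma eig (Q : 'M[K]_d) (a : 'I_d -> R) (lam : R) (v : 'cV[K]_d) :
  Q *m kadj Q = 1%:M -> v != 0 ->
  (Q *m dg a *m kadj Q) *m v = kr lam *: v ->
  (exists m, a m = lam) /\ forall i, a i != lam -> (kadj Q *m v) i 0 = 0.
Proof.
move=> HQ nv Hv; have HQl : kadj Q *m Q = 1%:M by exact: mulmx1C.
set u := kadj Q *m v.
have E : dg a *m u = kr lam *: u.
  have := congr1 (mulmx (kadj Q)) Hv; rewrite !mulmxA HQl mul1mx -scalemxAr.
  by rewrite /u -mulmxA.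
have P2 : forall i, a i != lam -> u i 0 = 0.
  move=> i ne; have := congr1 (fun M : 'cV[K]_d => M i 0) E; rewrite /dg mul_diag_mx !mxE.
  move/eqP; rewrite -subr_eq0 -mulrBl mulf_eq0 => /orP[|/eqP //].
  rewrite subr_eq0 => /eqP /(@kofR_inj R b) e; by rewrite e eqxx in ne.
split => //; case: (pselect (exists m, a m = lam)) => // H; exfalso.
have u0 : u = 0.
  apply/matrixP => i j; rewrite (ord1 j) [RHS]mxE; apply: P2; apply/eqP => e; apply: H; by exists i.
move/eqP: nv; apply; by rewrite -[v]mul1mx -HQ -mulmxA -/u u0 mulmx0.
Qed.

Lemma hdotDr u v v' : hdot u (v + v') = hdot u v + hdot u v'.
Proof. by rewrite hdotC hdotDl kconjD -!hdotC. Qed.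

Lemma perp_prop (a c : 'cV[K]_d) : a != 0 -> c != 0 -> perp a = perp c ->
  exists2 al : K, al != 0 & c = al *: a.
Proof.
move=> na nc E.
have Nn : kr (norm2 a) != 0.
  by apply/eqP => /(congr1 (@kabs2 R b)); rewrite kabs2R kabs20 => /eqP; rewrite sqrf_eq0 gt_eqF // norm2_gt0.
set al := hdot c a / kr (norm2 a).
set x := c - al *: a.
have xa : hdot x a = 0.
  by rewrite /x hdotDl hdotNl hdotZl hdotxx /al divfK // subrr.
have xc : hdot x c = 0.
  have : perp a x by []. by rewrite E.
have : hdot x x = 0.
  rewrite {2}/x -scaleN1r hdotDr !hdotZr xc xa; by rewrite !mul0r addr0.
rewrite hdotxx => /eqP; rewrite -(kofR0 R b) => /eqP /(@kofR_inj R b) /norm2_eq0.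
move/eqP; rewrite /x subr_eq0 => /eqP ec.
exists al => //; apply/eqP => al0; move: nc; by rewrite ec al0 kofR0 scale0r eqxx.
Qed.
End E.
Section C.
Variables (R : realType) (b : bool) (d : nat).
Local Notation K := (Kfld R b).
Local Notation kc := (@kconj R b).
Local Notation ka := (@kabs2 R b).
Local Notation kr := (@kofR R b).
Local Notation hdot := (@hdot R b d).
Local Notation norm2 := (@norm2 R b d).
Local Notation dP := (@dP R b d).
Local Notation kadj := (@kadj R b d).

Lemma construct (i0 : 'I_d) (a : 'cV[K]_d) (th : R) : a != 0 -> 0 < th -> th < 1 ->
  exists bb : 'cV[K]_d,
    [/\ bb != 0, dP a bb < th & th ^+ 2 / 4 * norm2 bb <= ka (bb i0 0)].
Proof.
move=> na th0 th1.
have N0 : 0 < norm2 a := norm2_gt0 na.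
case: (leP (th ^+ 2 / 4 * norm2 a) (ka (a i0 0))) => [Hp|Hp].
  by exists a; split => //; rewrite dPxx.
set N := norm2 a in N0 Hp *; set p := ka (a i0 0) in Hp *; set q := th ^+ 2 / 4 in Hp *.
set A := N - p. set B := q * A / (1 - q).
have q0 : 0 < q by rewrite /q divr_gt0 // exprn_gt0.
have q1 : q < 1 / 4 by rewrite /q; nra.
have p0 : 0 <= p := kabs2_ge0 _.
have A0 : N * (1 - q) < A by rewrite /A; lra.
have A0' : 0 < A by nra.
have HB : B * (1 - q) = q * A by rewrite /B divfK // subr_eq0 gt_eqF //; lra.
have B0 : 0 <= B by rewrite /B divr_ge0 ?mulr_ge0 //; lra.
have [be [Hbe [r [r0 Hr]]]] : exists be : K, ka be = B /\ exists r, 0 <= r /\ a i0 0 * kc be = kr r.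
  case: (eqVneq (a i0 0) 0) => [a0|a0].
    exists (kr (Num.sqrt B)); split; first by rewrite kabs2R sqr_sqrtr.
    by exists 0; rewrite a0 mul0r kofR0.
  have pp : 0 < p.
    rewrite lt_neqAle p0 andbT; apply/eqP => /esym /(@kabs2_eq0 R b) e.
    by rewrite e eqxx in a0.
  exists (a i0 0 * kr (Num.sqrt (B / p))); split.
    rewrite kabs2M kabs2R sqr_sqrtr; last by rewrite divr_ge0 // ltW.
    by rewrite -/p mulrCA divff ?mulr1 // gt_eqF.
  exists (p * Num.sqrt (B / p)); split; first by rewrite mulr_ge0 ?sqrtr_ge0 ?ltW.
  by rewrite kconjM kconjR mulrA kmulconj kofRM.
set bb := a + (be - a i0 0) *: (delta_mx i0 0 : 'cV[K]_d).
have bi : forall i, i != i0 -> bb i 0 = a i 0.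
  by move=> i ne; rewrite !mxE (negbTE ne) /= mulr0 addr0.
have bi0 : bb i0 0 = be by rewrite !mxE !eqxx /= mulr1 addrC subrK.
have NE : N = p + \sum_(i | i != i0) ka (a i 0) by rewrite /N /Defs.norm2 (bigD1 i0).
have Sb : \sum_(i | i != i0) ka (a i 0) = A by rewrite /A NE addrC addKr.
have Nb : norm2 bb = B + A.
  rewrite /Defs.norm2 (bigD1 i0) //= bi0 Hbe -Sb; congr (_ + _).
  by apply: eq_bigr => i ne; rewrite (bi i ne).
have Hd : hdot a bb = kr (r + A).
  rewrite /Defs.hdot (bigD1 i0) //= bi0 Hr kofRD -Sb; congr (_ + _).
  rewrite (big_morph _ (@kofRD R b) (@kofR0 R b)); apply: eq_bigr => i ne.
  by rewrite (bi i ne) kmulconj.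
have nb : bb != 0.
  apply/eqP => b0; have : norm2 bb = 0.
    by rewrite b0 /Defs.norm2 big1 // => i _; rewrite mxE kabs20.
  rewrite Nb; lra.
exists bb; split => //; last by rewrite bi0 Hbe Nb -/q; nra.
rewrite /Defs.dP Hd kabs2R Nb -/N.
have : Num.sqrt (1 - (r + A) ^+ 2 / (N * (B + A))) < Num.sqrt (th ^+ 2).
  rewrite ltr_sqrt ?exprn_gt0 // ltrBlDr -ltrBlDl ltr_pdivlMr; last first.
    by apply: mulr_gt0 => //; lra.
  have h1 : (1 - 4 * q) * N < A * (1 - q) by nra.
  have h2 : (B + A) * (1 - q) = A by rewrite mulrDl HB; ring.
  have h3 : (1 - 4 * q) * N * (B + A) < A ^+ 2.
    have BA : 0 < B + A by lra.
    have : (1 - 4 * q) * N * (B + A) < A * (1 - q) * (B + A) by rewrite ltr_pM2r.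
    have h5 : A * (1 - q) * (B + A) = A ^+ 2.
      by transitivity (A * ((B + A) * (1 - q))); [ring | rewrite h2 expr2].
    by rewrite h5.
  have h4 : A ^+ 2 <= (r + A) ^+ 2 by nra.
  have -> : th ^+ 2 = 4 * q by rewrite /q; field.
  rewrite mulrA; lra.
by rewrite sqrtr_sqr gtr0_norm.
Qed.

Lemma core (i0 : 'I_d) (O I : 'M[K]_d) (s : 'I_d -> R) (s1 th : R) (x0 : 'cV[K]_d) :
  kadj O *m O = 1%:M -> I *m kadj I = 1%:M -> 0 < s i0 ->
  (forall i, i != i0 -> s i ^+ 2 <= s1 ^+ 2) -> x0 != 0 -> 0 < th -> th < 1 ->
  exists x', [/\ x' != 0, dP x0 x' < th &
    dP (O *m dg b s *m I *m x') (O *m delta_mx i0 0) ^+ 2 * (s i0 ^+ 2 * th ^+ 2)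
      <= 4 * s1 ^+ 2].
Proof.
move=> HO HI s0 Hs nx0 th0 th1.
have HIl : kadj I *m I = 1%:M by exact: mulmx1C.
have na : I *m x0 != 0.
  apply: contraNneq nx0 => e; by rewrite -[x0]mul1mx -HIl -mulmxA e mulmx0.
have [bb [nb Hd Hq]] := construct i0 na th0 th1.
have Ix : I *m (kadj I *m bb) = bb by rewrite mulmxA HI mul1mx.
exists (kadj I *m bb); split.
- by apply: contraNneq nb => e; rewrite -Ix e mulmx0.
- by rewrite -(dP_unit _ _ HIl) Ix.
rewrite -mulmxA Ix -mulmxA dP_unit //.
set y := dg b s *m bb.
have yi : forall i, y i 0 = kr (s i) * bb i 0.
  by move=> i; rewrite /y /dg mul_diag_mx !mxE.
have He : hdot y (delta_mx i0 0) = y i0 0.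
  rewrite /Defs.hdot (bigD1 i0) //= big1 ?addr0.
    by rewrite !mxE !eqxx /= -(kofR1 R b) kconjR kofR1 mulr1.
  by move=> i ne; rewrite !mxE (negbTE ne) /= kconj0 mulr0.
have Ne : norm2 (delta_mx i0 0 : 'cV[K]_d) = 1.
  rewrite /Defs.norm2 (bigD1 i0) //= big1 ?addr0.
    by rewrite !mxE !eqxx /= -(kofR1 R b) kabs2R expr1n.
  by move=> i ne; rewrite !mxE (negbTE ne) /= kabs20.
set kb0 := ka (bb i0 0).
set Tb := \sum_(i | i != i0) ka (bb i 0).
set T := \sum_(i | i != i0) (s i ^+ 2 * ka (bb i 0)).
have NbE : norm2 bb = kb0 + Tb by rewrite /Defs.norm2 (bigD1 i0).
have NyE : norm2 y = s i0 ^+ 2 * kb0 + T.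
  rewrite /Defs.norm2 (bigD1 i0) //= yi kabs2M kabs2R; congr (_ + _).
  by apply: eq_bigr => i _; rewrite yi kabs2M kabs2R.
have Tb0 : 0 <= Tb by apply: sumr_ge0 => i _; exact: kabs2_ge0.
have T0 : 0 <= T by apply: sumr_ge0 => i _; rewrite mulr_ge0 ?sqr_ge0 ?kabs2_ge0.
have TT : T <= s1 ^+ 2 * Tb.
  rewrite /T /Tb mulr_sumr; apply: ler_sum => i ne.
  by rewrite ler_wpM2r ?kabs2_ge0 ?Hs.
have Nb0 : 0 < norm2 bb := norm2_gt0 nb.
have q0 : 0 < th ^+ 2 / 4 by rewrite divr_gt0 // exprn_gt0.
have kb00 : 0 < kb0 by apply: lt_le_trans Hq; rewrite mulr_gt0.
have S00 : 0 < s i0 ^+ 2 * kb0 by rewrite mulr_gt0 // exprn_gt0.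
set S0 := s i0 ^+ 2 * kb0 in S00 NyE.
have Ny : 0 < S0 + T by lra.
rewrite /Defs.dP He Ne mulr1 NyE yi kabs2M kabs2R -/kb0 -/S0.
have -> : 1 - S0 / (S0 + T) = T / (S0 + T).
  have nz : S0 + T != 0 by rewrite gt_eqF.
  rewrite -{1}(divff nz) -mulrBl; congr (_ / _); ring.
rewrite sqr_sqrtr; last by rewrite divr_ge0 // ltW.
rewrite mulrC mulrA ler_pdivrMr //.
have e1 : s i0 ^+ 2 * th ^+ 2 * T <= s i0 ^+ 2 * th ^+ 2 * (s1 ^+ 2 * Tb).
  by rewrite ler_wpM2l // mulr_ge0 ?sqr_ge0.
have e2 : th ^+ 2 * Tb <= th ^+ 2 * norm2 bb by rewrite ler_wpM2l ?sqr_ge0 // NbE; lra.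
have e3 : th ^+ 2 * norm2 bb <= 4 * kb0.
  by move: Hq; rewrite -/kb0; lra.
have e4 : s i0 ^+ 2 * (s1 ^+ 2) * (th ^+ 2 * Tb) <= s i0 ^+ 2 * (s1 ^+ 2) * (4 * kb0).
  by apply: ler_wpM2l; [rewrite mulr_ge0 ?sqr_ge0 | lra].
rewrite /S0; nra.
Qed.
End C.
Section H.
Variables (R : realType) (b : bool) (d : nat).
Local Notation K := (Kfld R b).
Local Notation kc := (@kconj R b).
Local Notation ka := (@kabs2 R b).
Local Notation kr := (@kofR R b).
Local Notation hdot := (@hdot R b d).
Local Notation norm2 := (@norm2 R b d).
Local Notation dP := (@dP R b d).
Local Notation kadj := (@kadj R b d).
Local Notation dg := (@dg R b d).

Lemma dg_mul (a c : 'I_d -> R) : dg a *m dg c = dg (fun i => a i * c i).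
Proof. by rewrite /dg mulmx_diag; congr diag_mx; apply/matrixP => i j; rewrite !mxE kofRM. Qed.

Lemma dg_delta (a : 'I_d -> R) i : dg a *m delta_mx i 0 = kr (a i) *: (delta_mx i 0 : 'cV[K]_d).
Proof.
apply/matrixP => j l; rewrite /dg mul_diag_mx !mxE (ord1 l).
by case: eqP => [->|_]; rewrite /= ?mulr1 ?mulr0.
Qed.

Lemma gram (Q1 Q2 : 'M[K]_d) a : Q2 *m kadj Q2 = 1%:M ->
  (Q1 *m dg a *m Q2) *m kadj (Q1 *m dg a *m Q2) = Q1 *m dg (fun i => a i ^+ 2) *m kadj Q1.
Proof.
move=> H; rewrite !kadjM kadj_diag !mulmxA -(mulmxA _ Q2) H mulmx1 -(mulmxA _ (dg a)) dg_mul.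
by do 2 f_equal; apply/matrixP => i j; rewrite /dg !mxE expr2.
Qed.

Lemma eigvec (Q : 'M[K]_d) a i : kadj Q *m Q = 1%:M ->
  (Q *m dg a *m kadj Q) *m (Q *m (delta_mx i 0 : 'cV[K]_d)) = kr (a i) *: (Q *m delta_mx i 0).
Proof.
move=> H; by rewrite -!mulmxA (mulmxA (kadj Q)) H mul1mx dg_delta scalemxAr.
Qed.

Lemma linv_nz (Q : 'M[K]_d) (v : 'cV[K]_d) : kadj Q *m Q = 1%:M -> v != 0 -> Q *m v != 0.
Proof. move=> H; apply: contraNneq => e; by rewrite -[v]mul1mx -H -mulmxA e mulmx0. Qed.

Lemma delta_nz (i : 'I_d) : (delta_mx i 0 : 'cV[K]_d) != 0.
Proof.
apply/eqP => /matrixP /(_ i 0); rewrite !mxE !eqxx /= => /eqP; by rewrite oner_eq0.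
Qed.

Lemma supp1 (u : 'cV[K]_d) i0 : (forall i, i != i0 -> u i 0 = 0) -> u = u i0 0 *: delta_mx i0 0.
Proof.
move=> H; apply/matrixP => i j; rewrite (ord1 j) !mxE.
case: eqP => [->|/eqP ne]; rewrite /= ?mulr1 ?mulr0 //; exact: H.
Qed.

Lemma img_perp (h : 'M[K]_d) w : h \in unitmx ->
  (fun x => invmx h *m x) @` perp w = [set x | hdot (h *m x) w = 0].
Proof.
move=> hu; apply/seteqP; split => x /=.
  by case=> z zw <-; rewrite mulmxA mulmxV // mul1mx.
by move=> Hx; exists (h *m x) => //; rewrite mulmxA mulVmx // mul1mx.
Qed.

Lemma reduced_tail (G : bool -> set 'M[K]_d) h t : reduced G (h :: t) -> reduced G t.
Proof.
case=> H1 H2; split.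
  by move=> h0 ht; apply: H1; rewrite inE ht orbT.
by move=> k kt i; apply: (H2 k.+1).
Qed.

Lemma wordprod_unit (G : bool -> set 'M[K]_d) gs : (forall i, GLsemigroup (G i)) ->
  reduced G gs -> wordprod gs \in unitmx.
Proof.
move=> HG; elim: gs => [|h t IH] Hr /=; first by rewrite unitmx1.
rewrite unitmx_mul (IH (reduced_tail Hr)) andbT.
case: Hr => H1 _; case: (H1 h (mem_head _ _)) => [[]] Hh _.
  exact: (HG true).1 _ Hh.
exact: (HG false).1 _ Hh.
Qed.

Variables (G : bool -> set 'M[K]_d) (U V : bool -> set 'cV[K]_d).
Hypothesis HG : forall i, GLsemigroup (G i).
Hypothesis HU : forall i, projset (U i) /\ openP (U i).
Hypothesis HV : forall i, projset (V i) /\ openP (V i).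
Hypothesis PP : pingpong G U V.

Lemma sub_clos (W : set 'cV[K]_d) x : projset W -> W x -> closP W x.
Proof.
move=> pW Wx; have nx := (pW x Wx).1; split => // r r0; exists x; by rewrite dPxx.
Qed.

Lemma chainU h t j x : reduced G (h :: t) -> G j (last h t) -> closP (U (~~ j)) x ->
  exists i, G i h /\ U i (wordprod (h :: t) *m x).
Proof.
elim: t h j x => [|h' t IH] h j x Hr Hj Hx.
  exists j; split => //=; rewrite mulmx1.
  have h1 : h != 1%:M by case: Hr => H1 _; exact: (H1 h (mem_head _ _)).2.
  exact: ((PP j).2 h Hj h1).1 _ Hx.
have [i' [Gi' Ui']] := IH h' j x (reduced_tail Hr) Hj Hx.
case: (Hr) => H1 H2.
have [Gh h1] := H1 h (mem_head _ _).
have [ih Gih] : exists ih, G ih h by case: Gh => ?; [exists true | exists false].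
have ne : i' = ~~ ih.
  case: (boolP (i' == ih)) => [/eqP e|]; last by case: i' ih {Gi' Ui' Gih} => [] [].
  by exfalso; apply: (H2 0 _ ih) => //=; split => //; rewrite -e.
exists ih; split => //.
rewrite /= -mulmxA; apply: ((PP ih).2 h Gih h1).1.
rewrite -ne; apply: sub_clos => //; exact: (HU i').1.
Qed.

Lemma chainV h t j w : reduced G (h :: t) -> G j h -> closP (V (~~ j)) w ->
  exists i, G i (last h t) /\
    exists2 w', V i w' & perp w' = [set x | hdot (wordprod (h :: t) *m x) w = 0].
Proof.
elim: t h j w => [|h' t IH] h j w Hr Hj Hw.
  have h1 : h != 1%:M by case: Hr => H1 _; exact: (H1 h (mem_head _ _)).2.
  have [w' Vw' E] := ((PP j).2 h Hj h1).2 w Hw.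
  exists j; split => //; exists w' => //=; rewrite mulmx1 -E img_perp //.
  exact: (HG j).1 _ Hj.
case: (Hr) => H1 H2.
have h1 : h != 1%:M := (H1 h (mem_head _ _)).2.
have [w1 Vw1 E1] := ((PP j).2 h Hj h1).2 w Hw.
have hu : h \in unitmx := (HG j).1 _ Hj.
rewrite img_perp // in E1.
have Gh' : G (~~ j) h'.
  have nj : ~ G j h' by move=> g; apply: (H2 0 _ j) => //.
  have hin : h' \in [:: h, h' & t] by rewrite !inE eqxx orbT.
  have [Hh' _] := H1 h' hin.
  by case: Hh' => Gb; case: j {Hj Hw Vw1 E1 IH} nj => //=.
have Hw1 : closP (V (~~ ~~ j)) w1 by rewrite negbK; apply: sub_clos => //; exact: (HV j).1.
have [i [Gi [w' Vw' E']]] := IH h' (~~ j) w1 (reduced_tail Hr) Gh' Hw1.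
exists i; split => //; exists w' => //; rewrite E'.
apply/seteqP; split => x /=.
  by move=> Hx; have : perp w1 (wordprod (h' :: t) *m x) by []; rewrite -E1 /= mulmxA.
move=> Hx; have : [set x | hdot (h *m x) w = 0] (wordprod (h' :: t) *m x).
  by rewrite /= mulmxA.
by rewrite E1.
Qed.
End H.
Lemma dist_pt_hyp_le1 (R : realType) (b : bool) (d : nat) (x w : 'cV[Kfld R b]_d) :
  0 <= dist_pt_hyp x w <= 1.
Proof.
have H : forall r, [set dP x y | y in [set y | y != 0 /\ perp w y]] r -> 0 <= r <= 1.
  by move=> r [y _ <-]; rewrite dP_ge0 dP_le1.
by rewrite /dist_pt_hyp inf_le1 ?inf_ge0 // => r /H /andP[].
Qed.

Lemma distUV_le1 (R : realType) (b : bool) (d : nat) (A B : set 'cV[Kfld R b]_d) :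
  distUV A B <= 1.
Proof.
rewrite /distUV; apply: inf_le1 => r [x [w [_ [_ ->]]]]; exact: dist_pt_hyp_le1.
Qed.

Lemma fin_arith (R : realType) (D s0 s1 th eps : R) : 0 <= D -> 0 < s0 -> 0 < th -> 0 < eps ->
  0 <= s1 -> 16 * s1 <= eps * th * s0 -> D ^+ 2 * (s0 ^+ 2 * th ^+ 2) <= 4 * s1 ^+ 2 ->
  D <= eps / 8.
Proof.
move=> D0 s00 th0 e0 s10 H1 H2.
have h1 : (16 * s1) ^+ 2 <= (eps * th * s0) ^+ 2 by rewrite ler_pXn2r // ?nnegrE; nra.
have st : 0 < (s0 * th) ^+ 2 by rewrite exprn_gt0 // mulr_gt0.
have h2 : (64 * D ^+ 2) * (s0 * th) ^+ 2 <= eps ^+ 2 * (s0 * th) ^+ 2.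
  have -> : 64 * D ^+ 2 * (s0 * th) ^+ 2 = 16 * (D ^+ 2 * (s0 ^+ 2 * th ^+ 2)) * 4 by ring.
  have -> : eps ^+ 2 * (s0 * th) ^+ 2 = (eps * th * s0) ^+ 2 by ring.
  nra.
rewrite ler_pM2r // in h2.
have h3 : (8 * D) ^+ 2 <= eps ^+ 2 by nra.
nra.
Qed.

Unset Implicit Arguments.
Set Strict Implicit.

Theorem lemma3p1 (R : realType) (b : bool) (d : nat) (hd : (2 <= d)%N)
  (G : bool -> set 'M[Kfld R b]_d) (U V : bool -> set 'cV[Kfld R b]_d)
  (eps theta : R) (x y : bool -> 'cV[Kfld R b]_d)
  (gs : seq 'M[Kfld R b]_d) (g : 'M[Kfld R b]_d) :
  (forall i, GLsemigroup (G i)) ->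
  (forall i, projset (U i) /\ openP (U i)) ->
  (forall i, projset (V i) /\ openP (V i)) ->
  pingpong G U V ->
  0 < eps ->
  (forall i, eps <= distUV (closP (U i)) (closP (V (~~ i)))) ->
  0 < theta -> theta < eps ^+ 2 ->
  (forall i, U i (x i) /\ V i (y i) /\
     ball_sub (x i) theta (U i) /\ ball_sub (y i) theta (V i)) ->
  let M := Num.max (16 / (eps * theta))
                   (8 * Num.sqrt ((d - 1)%:R) / eps ^+ 2) in
  (* g in Delta \ F, given as a reduced word g = g_1 ... g_n, n >= 1 *)
  (0 < size gs)%N -> reduced G gs -> g = wordprod gs ->
  (exists k s k', cartan g k s k' /\ M <= nth 0 s 0 / nth 0 s 1) ->
  (* (i) *)
  (forall i, G i (head 1%:M gs) -> (forall j, G j (head 1%:M gs) -> j = i) ->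
     forall k s k', cartan g k s k' -> nth 0 s 1 < nth 0 s 0 ->
     forall z, z != 0 -> span_first k 1 z ->
       dist_pt_set z (U i) <= eps / 8) /\
  (* (ii) *)
  (forall i, G i (last 1%:M gs) -> (forall j, G j (last 1%:M gs) -> j = i) ->
     forall k s k', cartan (invmx g) k s k' ->
       nth 0 s (d.-1) < nth 0 s (d.-2) ->
     forall w, w != 0 -> perp w = span_first k d.-1 ->
       dist_pt_set w (V i) <= eps / 8).
Proof.
move=> HG HU HV PP eps0 Heps th0 th_eps Hxy M gs0 Hr gE [k1 [s1 [k1' [Hc1 HM]]]].
case: Hc1 => [[uk1 uk1'] sz1 s1ge0 s1sort gE1].
have d0 : (0 < d)%N by apply: leq_trans hd.
pose i0 := Ordinal d0. pose i1 := Ordinal hd.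
pose s1f := fun i : 'I_d => nth 0 s1 i.
have gE1' : g = k1 *m dg b s1f *m k1' := gE1.
have eps1 : eps <= 1 := le_trans (Heps true) (distUV_le1 _ _).
have th1 : theta < 1 by nra.
have M16 : 16 / (eps * theta) <= M by rewrite /M le_max lexx.
have et0 : 0 < eps * theta by rewrite mulr_gt0.
have M0 : 0 < M by apply: lt_le_trans M16; rewrite divr_gt0.
have s1i0 : forall i : 'I_d, 0 <= s1f i by move=> i; apply: s1ge0; exact: ltn_ord.
have s1le0 : forall i : 'I_d, s1f i <= s1f i0 by move=> i; apply: s1sort; rewrite /= ltn_ord.
have s1le1 : forall i : 'I_d, i != i0 -> s1f i <= s1f i1.
  move=> i ne; apply: s1sort; rewrite ltn_ord andbT lt0n; exact: ne.
have s1p : 0 < s1f i1.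
  rewrite lt_neqAle s1i0 andbT; apply/eqP => e; move: HM.
  by rewrite -[nth 0 s1 1]/(s1f i1) -e invr0 mulr0 leNgt M0.
have HM' : 16 / (eps * theta) <= s1f i0 / s1f i1 := le_trans M16 HM.
have Hkey : 16 * s1f i1 <= eps * theta * s1f i0.
  move: HM'; rewrite ler_pdivlMr // => H.
  have cE : 16 / (eps * theta) * (eps * theta) = 16 by rewrite divfK // gt_eqF.
  have := ler_wpM2l (ltW et0) H.
  have -> : eps * theta * (16 / (eps * theta) * s1f i1) = 16 * s1f i1.
    by rewrite mulrA [eps * theta * _]mulrC cE.
  done.
have s10 : 0 < s1f i0 by apply: lt_le_trans s1p _; exact: s1le0.
have et1 : eps * theta < 1 by nra.
have gap1 : s1f i1 < s1f i0.
  have : eps * theta * s1f i0 < s1f i0 by rewrite -[X in _ < X]mul1r ltr_pM2r.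
  lra.
have s1sq : forall i : 'I_d, i != i0 -> s1f i ^+ 2 <= s1f i1 ^+ 2.
  by move=> i ne; rewrite ler_pXn2r ?nnegrE ?s1i0 ?s1le1.
have s1sq_lt : forall i : 'I_d, i != i0 -> s1f i ^+ 2 < s1f i0 ^+ 2.
  move=> i ne; have := s1le1 i ne; have := s1i0 i; nra.
have s1sq_le : forall i : 'I_d, s1f i ^+ 2 <= s1f i0 ^+ 2.
  by move=> i; rewrite ler_pXn2r ?nnegrE ?s1i0 ?s1le0.
case: gs gs0 Hr gE => [//|h t] _ Hr gE.
have gu : g \in unitmx by rewrite gE; exact: wordprod_unit Hr.
have [jl Gjl] : exists j, G j (last h t).
  have hin : last h t \in h :: t by exact: mem_last.
  by case: ((Hr.1 _ hin).1) => ?; [exists true | exists false].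
have [jh Gjh] : exists j, G j h.
  by case: ((Hr.1 _ (mem_head _ _)).1) => ?; [exists true | exists false].
split.
- move=> i Gi Hu k s k' Hc _ z nz [cz Hcz zE].
  case: Hc => [[uk uk'] sz sge0 ssort gE2].
  pose sf := fun i : 'I_d => nth 0 s i.
  have gE2' : g = k *m dg b sf *m k' := gE2.
  have PA : g *m kadj g = k1 *m dg b (fun i => s1f i ^+ 2) *m kadj k1.
    by rewrite {1 2}gE1'; apply: gram.
  have PB : g *m kadj g = k *m dg b (fun i => sf i ^+ 2) *m kadj k.
    by rewrite {1 2}gE2'; apply: gram.
  set v := k *m (delta_mx i0 0 : 'cV[Kfld R b]_d).
  have nv : v != 0 := linv_nz (unitary_l uk) (delta_nz _ _ _).
  have Pv : (k1 *m dg b (fun i => s1f i ^+ 2) *m kadj k1) *m v = kofR b (sf i0 ^+ 2) *: v.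
    by rewrite -PA PB /v eigvec // unitary_l.
  have [[m Hm] Hsupp] := eig uk1 nv Pv.
  set v1 := k1 *m (delta_mx i0 0 : 'cV[Kfld R b]_d).
  have nv1 : v1 != 0 := linv_nz (unitary_l uk1) (delta_nz _ _ _).
  have Pv1 : (k *m dg b (fun i => sf i ^+ 2) *m kadj k) *m v1 = kofR b (s1f i0 ^+ 2) *: v1.
    by rewrite -PB PA /v1 eigvec // unitary_l.
  have [[p Hp] _] := eig uk nv1 Pv1.
  have sp : sf p ^+ 2 <= sf i0 ^+ 2.
    have a1 : 0 <= sf p by apply: sge0; exact: ltn_ord.
    have a2 : sf p <= sf i0 by apply: ssort; rewrite /= ltn_ord.
    nra.
  have Eq : sf i0 ^+ 2 = s1f i0 ^+ 2.
    have := s1sq_le m; lra.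
  have Hs : forall i, i != i0 -> (kadj k1 *m v) i 0 = 0.
    move=> j ne; apply: Hsupp; rewrite Eq; apply/eqP => e.
    by have := s1sq_lt j ne; rewrite e ltxx.
  have vE : v = (kadj k1 *m v) i0 0 *: v1.
    by rewrite /v1 scalemxAr -(supp1 Hs) mulmxA uk1 mul1mx.
  have czE : cz = cz i0 0 *: delta_mx i0 0.
    apply: supp1 => j ne; apply: Hcz; rewrite lt0n; exact: ne.
  set al := cz i0 0 * (kadj k1 *m v) i0 0.
  have zE' : z = al *: v1 by rewrite -zE czE -scalemxAr -/v vE scalerA.
  have nal : al != 0 by apply: contraNneq nz => e; rewrite zE' e scale0r.
  have nx0 : x (~~ jl) != 0 := ((HU (~~ jl)).1 _ (Hxy (~~ jl)).1).1.
  have [x' [nx' dx' Hb]] := core (unitary_l uk1) uk1' s10 s1sq nx0 th0 th1.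
  have Ux' : U (~~ jl) x' := (Hxy (~~ jl)).2.2.1 x' nx' dx'.
  have [i' [Gi' Ui']] := chainU HU PP Hr Gjl (sub_clos ((HU _).1) Ux').
  have ii : i' = i by apply: Hu.
  rewrite ii -gE gE1' in Ui'.
  apply: le_trans (inf_le_elem _ _) _.
  + by move=> r [yy _ <-]; exact: dP_ge0.
  + by exists (k1 *m dg b s1f *m k1' *m x').
  rewrite zE' dPZ // dP_sym.
  apply: fin_arith Hkey Hb; rewrite ?dP_ge0 ?s1i0 //.
- move=> i Gi Hu k s k' Hc _ w nw Hperp.
  case: Hc => [[uk uk'] sz sge0 ssort hE].
  pose sf := fun i : 'I_d => nth 0 s i.
  have dl : (d.-1 < d)%N by rewrite prednK // ltnSn.
  pose il := Ordinal dl.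
  have hE' : invmx g = k *m dg b sf *m k' := hE.
  have ukl : kadj k *m k = 1%:M := unitary_l uk.
  have uk1l : kadj k1 *m k1 = 1%:M := unitary_l uk1.
  have uk1'l : kadj k1' *m k1' = 1%:M := unitary_l uk1'.
  have gadj : kadj g = kadj k1' *m dg b s1f *m kadj k1.
    by rewrite gE1' !kadjM kadj_diag mulmxA.
  have PB : invmx g *m kadj (invmx g) = k *m dg b (fun i => sf i ^+ 2) *m kadj k.
    by rewrite {1 2}hE'; apply: gram.
  have PA : kadj g *m g = kadj k1' *m dg b (fun i => s1f i ^+ 2) *m kadj (kadj k1').
    rewrite -{2}(kadjK g) {1 2}gadj; apply: gram; by rewrite kadjK.
  have PP' : (invmx g *m kadj (invmx g)) *m (kadj g *m g) = 1%:M.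
    by rewrite -mulmxA (mulmxA (kadj _)) -kadjM mulmxV // kadj1 mul1mx mulVmx.
  have P'P : (kadj g *m g) *m (invmx g *m kadj (invmx g)) = 1%:M := mulmx1C PP'.
  set P := invmx g *m kadj (invmx g) in PB PP' P'P.
  set P' := kadj g *m g in PA PP' P'P.
  set v := k *m (delta_mx il 0 : 'cV[Kfld R b]_d).
  have nv : v != 0 := linv_nz ukl (delta_nz _ _ _).
  have Pv : P *m v = kofR b (sf il ^+ 2) *: v by rewrite PB /v eigvec.
  set lam := sf il ^+ 2 in Pv *.
  have lam0 : lam != 0.
    apply: contraNneq nv => e; rewrite -[v]mul1mx -P'P -mulmxA Pv e.
    by rewrite kofR0 scale0r mulmx0.
  have P'v : P' *m v = kofR b (lam^-1) *: v.
    have : P' *m (P *m v) = v by rewrite mulmxA P'P mul1mx.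
    rewrite Pv -scalemxAr => /(congr1 (fun u => kofR b (lam^-1) *: u)).
    by rewrite scalerA -kofRM mulVf // kofR1 scale1r => ->.
  have QQ : kadj k1' *m kadj (kadj k1') = 1%:M by rewrite kadjK.
  have P'v' : (kadj k1' *m dg b (fun i => s1f i ^+ 2) *m kadj (kadj k1')) *m v
      = kofR b (lam^-1) *: v by rewrite -PA.
  have [[m Hm] Hsupp] := eig QQ nv P'v'.
  set tt := kadj k1' *m (delta_mx i0 0 : 'cV[Kfld R b]_d).
  have QQl : kadj (kadj k1') *m kadj k1' = 1%:M by rewrite kadjK.
  have nt : tt != 0 := linv_nz QQl (delta_nz _ _ _).
  have P'tt : P' *m tt = kofR b (s1f i0 ^+ 2) *: tt by rewrite PA /tt eigvec.
  have mu0 : s1f i0 ^+ 2 != 0 by rewrite expf_neq0 // gt_eqF.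
  have Pt : P *m tt = kofR b ((s1f i0 ^+ 2)^-1) *: tt.
    have : P *m (P' *m tt) = tt by rewrite mulmxA PP' mul1mx.
    rewrite P'tt -scalemxAr => /(congr1 (fun u => kofR b ((s1f i0 ^+ 2)^-1) *: u)).
    by rewrite scalerA -kofRM mulVf // kofR1 scale1r => ->.
  have Pt' : (k *m dg b (fun i => sf i ^+ 2) *m kadj k) *m tt
      = kofR b ((s1f i0 ^+ 2)^-1) *: tt by rewrite -PB.
  have [[p Hp] _] := eig uk nt Pt'.
  have slp : lam <= sf p ^+ 2.
    have a1 : 0 <= sf il by apply: sge0.
    have a2 : sf il <= sf p by apply: ssort; rewrite ltn_ord andbT -ltnS prednK // ltn_ord.
    rewrite /lam; nra.
  have lampos : 0 < lam by rewrite lt_neqAle eq_sym lam0 /lam sqr_ge0.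
  have Eq : lam^-1 = s1f i0 ^+ 2.
    have h1 : lam^-1 <= s1f i0 ^+ 2 by rewrite -Hm.
    have h2 : lam * (s1f i0 ^+ 2) <= 1.
      by rewrite -(mulVf mu0) ler_pM2r ?exprn_gt0 // -Hp.
    have h3 : lam * lam^-1 = 1 by rewrite mulfV.
    have h4 : 0 < s1f i0 ^+ 2 by rewrite exprn_gt0.
    nra.
  have Hs : forall j, j != i0 -> (kadj (kadj k1') *m v) j 0 = 0.
    move=> j ne; apply: Hsupp; rewrite Eq; apply/eqP => e.
    by have := s1sq_lt j ne; rewrite e ltxx.
  have vE : v = (kadj (kadj k1') *m v) i0 0 *: tt.
    by rewrite /tt scalemxAr -(supp1 Hs) mulmxA kadjK uk1'l mul1mx.
  set u := kadj k *m w.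
  have Hu0 : forall j, j != il -> u j 0 = 0.
    move=> j ne.
    have jlt : (j < d.-1)%N.
      have ne' : (j : nat) != d.-1 by apply: contra ne => /eqP e; apply/eqP; apply: val_inj.
      by rewrite ltn_neqAle ne' /= -ltnS prednK // ltn_ord.
    have : perp w (k *m delta_mx j 0).
      rewrite Hperp; exists (delta_mx j 0) => // l hl; rewrite !mxE.
      case: eqP => [e|] //=; by rewrite e leqNgt jlt in hl.
    rewrite /perp /= hdot_mul -/u => H.
    have : hdot (delta_mx j 0) u = kconj (u j 0).
      rewrite /Defs.hdot (bigD1 j) //= big1 ?addr0.
        by rewrite !mxE !eqxx /= mul1r.
      by move=> l ne'; rewrite !mxE (negbTE ne') /= mul0r.
    rewrite H => /(congr1 (@kconj R b)); rewrite kconjK kconj0 => <- //.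
  have wE : w = u il 0 *: v.
    by rewrite /v scalemxAr -(supp1 Hu0) /u mulmxA uk mul1mx.
  set al := u il 0 * (kadj (kadj k1') *m v) i0 0.
  have wE' : w = al *: tt by rewrite wE {1}vE scalerA.
  have nal : al != 0 by apply: contraNneq nw => e; rewrite wE' e scale0r.
  have ny0 : y (~~ jh) != 0 := ((HV (~~ jh)).1 _ (Hxy (~~ jh)).2.1).1.
  have OO : kadj (kadj k1') *m kadj k1' = 1%:M := QQl.
  have II : kadj k1 *m kadj (kadj k1) = 1%:M by rewrite kadjK.
  have [y' [ny' dy' Hb]] := core OO II s10 s1sq ny0 th0 th1.
  have Vy' : V (~~ jh) y' := (Hxy (~~ jh)).2.2.2 y' ny' dy'.
  have [i' [Gi' [w' Vw' Ew']]] := chainV HG HV PP Hr Gjh (sub_clos ((HV _).1) Vy').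
  have ii : i' = i by apply: Hu.
  rewrite ii in Vw'. rewrite -gE in Ew'.
  have Ew'' : perp w' = perp (kadj g *m y').
    rewrite Ew'; apply/seteqP; split => z /=; by rewrite /perp /= hdot_mul.
  have ngy : kadj g *m y' != 0.
    apply: contraNneq ny' => e.
    have : kadj (invmx g) *m kadj g = 1%:M by rewrite -kadjM mulmxV // kadj1.
    by move=> H; rewrite -[y']mul1mx -H -mulmxA e mulmx0.
  have nw' : w' != 0 := ((HV i).1 _ Vw').1.
  have [be nbe w'E] := perp_prop ngy nw' (esym Ew'').
  apply: le_trans (inf_le_elem _ _) _.
  + by move=> r [yy _ <-]; exact: dP_ge0.
  + by exists w'.
  rewrite wE' dPZ // w'E dP_sym dPZ // gadj.
  apply: fin_arith Hkey Hb; rewrite ?dP_ge0 ?s1i0 //.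
Qed.
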